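(* Let $n=ab$ where $a\ge b\ge 2$ are integers. Fix an integer $\beta\ge 2$, and for a positive integer $d$ define $\vartheta_d:\{0,1,\ldots,n-1\}\to\mathbb{Z}_{\ge 0}$ by $\vartheta_d(x)=\beta\lfloor x/d\rfloor d+(x\bmod d)$. Let $X$ be the $n\times n$ matrix with entries $X_{j,k}=\frac{1}{\sqrt n}\zeta_{\beta n}^{\vartheta_a(j)\vartheta_b(k)}$ for $j,k\in\{0,\ldots,n-1\}$, where $\zeta_m=e^{2\pi\mathtt{i}/m}$. Then $X$ is type-II. Moreover, if $G$ is the graph with adjacency matrix $A=X\,\mathrm{diag}(\vartheta_b(0),\ldots,\vartheta_b(n-1))\,X^{-1}$ (i.e. eigenvalues $\{\vartheta_b(k)\}$ with $A$ unitarily diagonalized by $X$), then $G$ has universal perfect state transfer.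
   Context: A type-II matrix is a unitary matrix all of whose entries have the same modulus. $x\bmod d$ denotes the remainder in $\{0,\ldots,d-1\}$. A graph with Hermitian adjacency matrix $A$ has universal perfect state transfer if for every pair of vertices $v,w$ there is $t>0$ with $|\langle w|e^{-\mathtt{i} At}|v\rangle|=1$. *)

(* Defs.v *)
From mathcomp Require Import all_boot all_order all_algebra.
From mathcomp Require Import all_classical all_reals all_analysis.
From mathcomp Require Export complex.
Set Implicit Arguments. Unset Strict Implicit. Unset Printing Implicit Defensive.
Import Order.TTheory GRing.Theory Num.Theory.
Import numFieldNormedType.Exports.
Local Open Scope ring_scope.
Local Open Scope complex_scope.
Local Open Scope classical_set_scope.

Definition expi (R : realType) (theta : R) : R[i] := (cos theta +i* sin theta)%C.

(* zeta_m ^ e = e^{2 pi i e / m} *)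
Definition zeta_pow (R : realType) (m e : nat) : R[i] :=
  expi (2 * pi * e%:R / m%:R).

Definition vartheta (beta d x : nat) : nat := (beta * (x %/ d) * d + x %% d)%N.

Definition Xmat (R : realType) (a b beta : nat) : 'M[R[i]]_(a * b) :=
  \matrix_(j, k) ((Num.sqrt ((a * b)%:R : R))^-1%:C *
                  zeta_pow R (beta * (a * b)) (vartheta beta a j * vartheta beta b k)).

Definition adjmx (R : realType) (n : nat) (M : 'M[R[i]]_n) : 'M[R[i]]_n :=
  (map_mx (fun z => z^*) M)^T.

Definition unitary (R : realType) (n : nat) (M : 'M[R[i]]_n) : Prop :=
  M *m adjmx M = 1%:M /\ adjmx M *m M = 1%:M.

Definition typeII (R : realType) (n : nat) (M : 'M[R[i]]_n) : Prop :=
  unitary M /\ forall j k j' k', `|M j k| = `|M j' k'|.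

Definition cvgC (R : realType) (u : nat -> R[i]) (z : R[i]) : Prop :=
  ((fun N => complex.Re (u N)) @ \oo --> complex.Re z) /\
  ((fun N => complex.Im (u N)) @ \oo --> complex.Im z).

Definition is_mexp (R : realType) (n : nat) (M U : 'M[R[i]]_n) : Prop :=
  forall j k, cvgC (fun N => (\sum_(m < N) (m`!%:R)^-1 *: M ^+ m) j k) (U j k).

Definition universal_pst (R : realType) (n : nat) (A : 'M[R[i]]_n) : Prop :=
  forall v w : 'I_n, exists t : R, 0 < t /\
    exists U : 'M[R[i]]_n, is_mexp ((- 'i * t%:C) *: A) U /\ `|U w v| = 1.

(* Main.v *)
Require Import Defs.
From mathcomp Require Import all_boot all_order all_algebra.
From mathcomp Require Import all_classical all_reals all_analysis.
From mathcomp Require Import complex.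
From mathcomp Require Import ring lra zify.
Import Order.TTheory GRing.Theory Num.Theory.
Import numFieldNormedType.Exports.
Local Open Scope ring_scope.
Local Open Scope complex_scope.
Local Open Scope classical_set_scope.

Lemma pow_conj (C : comPzRingType) (n : nat) (P Q : 'M[C]_n) (d : 'rV[C]_n) (c : C) m :
  Q *m P = 1%:M -> P *m Q = 1%:M ->
  (c *: (P *m diag_mx d *m Q)) ^+ m = P *m diag_mx (\row_k (c * d 0 k) ^+ m) *m Q.
Proof.
move=> QP PQ; elim: m => [|m IH].
  rewrite expr0; have -> : (1 : 'M[C]_n) = 1%:M by []. rewrite -PQ; congr (_ *m _).
  apply/matrixP=> i j; rewrite mul_mx_diag !mxE expr0.
  by case: (i == j); rewrite ?mulr1 ?mulr0 ?mulr1n ?mulr0n.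
rewrite exprS IH -mulmxE.
have -> : c *: (P *m diag_mx d *m Q) = P *m diag_mx (c *: d) *m Q.
  by rewrite linearZ /= scalemxAl scalemxAr.
rewrite !mulmxA -[P *m diag_mx (c *: d) *m Q *m P](mulmxA) QP mulmx1.
rewrite -[_ *m diag_mx _ *m diag_mx _]mulmxA mulmx_diag; congr (_ *m _ *m _).
by apply/matrixP=> i j; rewrite !mxE exprS.
Qed.
Section CvgC.
Variable R : realType.

Lemma cvgC_add (u v : nat -> R[i]) a b : cvgC u a -> cvgC v b ->
  cvgC (fun N => u N + v N) (a + b).
Proof.
move=> [ur ui] [vr vi]; split.
  have -> : (fun N => complex.Re (u N + v N)) = (fun N => complex.Re (u N)) + (fun N => complex.Re (v N)).
    by apply/funext => N; rewrite raddfD.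
  by rewrite raddfD; exact: cvgD.
have -> : (fun N => complex.Im (u N + v N)) = (fun N => complex.Im (u N)) + (fun N => complex.Im (v N)).
  by apply/funext => N; rewrite raddfD.
by rewrite raddfD; exact: cvgD.
Qed.

Lemma cvgC_cst (a : R[i]) : cvgC (fun _ => a) a.
Proof. by split; exact: cvg_cst. Qed.

Lemma cvgC_sum (I : Type) (r : seq I) (u : I -> nat -> R[i]) (a : I -> R[i]) :
  (forall l, cvgC (u l) (a l)) ->
  cvgC (fun N => \sum_(l <- r) u l N) (\sum_(l <- r) a l).
Proof.
move=> h; elim: r => [|x r IH].
  under eq_fun do rewrite big_nil. rewrite big_nil; exact: cvgC_cst.
under eq_fun do rewrite big_cons. rewrite big_cons; exact: cvgC_add.
Qed.

Lemma cvgC_scale (u : nat -> R[i]) a c : cvgC u a ->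
  cvgC (fun N => c * u N) (c * a).
Proof.
move=> [ur ui]; case: c => c1 c2; split.
  have -> : (fun N => complex.Re ((c1 +i* c2) * u N)) =
     (fun N => c1 * complex.Re (u N) - c2 * complex.Im (u N)).
    by apply/funext => N; case: (u N).
  case: a ur ui => a1 a2 /= ur ui.
  apply: cvgB; [exact: cvgMl_tmp | exact: cvgMl_tmp].
have -> : (fun N => complex.Im ((c1 +i* c2) * u N)) =
   (fun N => c1 * complex.Im (u N) + c2 * complex.Re (u N)).
  by apply/funext => N; case: (u N).
case: a ur ui => a1 a2 /= ur ui.
apply: cvgD; [exact: cvgMl_tmp | exact: cvgMl_tmp].
Qed.
End CvgC.
Lemma entry_diag (R : realType) n (P Q : 'M[R[i]]_n) (e : 'rV[R[i]]_n) j k :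
  (P *m diag_mx e *m Q) j k = \sum_l P j l * Q l k * e 0 l.
Proof.
rewrite mul_mx_diag mxE; apply: eq_bigr => l _; rewrite mxE; ring.
Qed.

Lemma mexp_diag (R : realType) n (P Q : 'M[R[i]]_n) (d : 'rV[R[i]]_n) (c : R[i])
   (f : 'I_n -> R[i]) :
  Q *m P = 1%:M -> P *m Q = 1%:M ->
  (forall l, cvgC (fun N => \sum_(m < N) (m`!%:R)^-1 * (c * d 0 l) ^+ m) (f l)) ->
  is_mexp (c *: (P *m diag_mx d *m Q)) (P *m diag_mx (\row_l f l) *m Q).
Proof.
move=> QP PQ hf j k.
have -> : (fun N => (\sum_(m < N) (m`!%:R)^-1 *: (c *: (P *m diag_mx d *m Q)) ^+ m) j k)
   = (fun N => \sum_l P j l * Q l k * \sum_(m < N) (m`!%:R)^-1 * (c * d 0 l) ^+ m).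
  apply/funext => N; rewrite summxE.
  under eq_bigr do rewrite pow_conj // mxE entry_diag mulr_sumr.
  rewrite exchange_big /=; apply: eq_bigr => l _; rewrite mulr_sumr.
  by apply: eq_bigr => m _; rewrite mxE; ring.
rewrite entry_diag; apply: cvgC_sum => l; rewrite mxE; apply: cvgC_scale; exact: hf.
Qed.
Section Base.
Variable R : realType.

Lemma mi_even k : (- 'i) ^+ k.*2 = (-1) ^+ k :> R[i].
Proof. by rewrite -muln2 mulnC exprM sqrrN sqr_i. Qed.

Lemma term_eq (th : R) m :
  (m`!%:R)^-1 * (- 'i * th%:C) ^+ m = (cos_coeff th m)%:C - 'i * (sin_coeff th m)%:C.
Proof.
rewrite exprMn /cos_coeff /sin_coeff /=.
case/boolP: (odd m) => hm.
  have -> : m = (m./2).*2.+1 by rewrite -[LHS]odd_double_half hm.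
  rewrite /= -!exprnP doubleK uphalf_double exprSr mi_even.
  rewrite !rmorphM /= !rmorphXn /= !fmorphV /= !rmorphN /= !rmorph_nat /= rmorph1.
  ring.
have -> : m = (m./2).*2 by rewrite -[LHS]odd_double_half (negbTE hm).
rewrite -!exprnP doubleK mi_even.
rewrite !rmorphM /= !rmorphXn /= !fmorphV /= !rmorphN /= !rmorph_nat /= rmorph1.
ring.
Qed.
End Base.
Section Base2.
Variable R : realType.
Lemma cvg_cos (th : R) : series (cos_coeff th) @ \oo --> cos th.
Proof. rewrite cos.unlock. exact: is_cvg_series_cos_coeff. Qed.
Lemma cvg_sin (th : R) : series (sin_coeff th) @ \oo --> sin th.
Proof. rewrite sin.unlock. exact: is_cvg_series_sin_coeff. Qed.

Lemma exp_series (th : R) :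
  cvgC (fun N => \sum_(m < N) (m`!%:R)^-1 * (- 'i * th%:C) ^+ m) (expi (- th)).
Proof.
under eq_fun do under eq_bigr do rewrite term_eq.
split.
  have -> : (fun N => complex.Re (\sum_(m < N) ((cos_coeff th m)%:C - 'i * (sin_coeff th m)%:C)))
     = series (cos_coeff th).
    apply/funext => N; rewrite raddf_sum /series /= big_mkord; apply: eq_bigr => m _ /=.
    ring.
  rewrite /expi /= cosN; exact: cvg_cos.
have -> : (fun N => complex.Im (\sum_(m < N) ((cos_coeff th m)%:C - 'i * (sin_coeff th m)%:C)))
     = (fun N => - series (sin_coeff th) N).
  apply/funext => N; rewrite raddf_sum /series /= big_mkord -sumrN; apply: eq_bigr => m _ /=.
  ring.
rewrite /expi /= sinN; exact: (cvgN (cvg_sin th)).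
Qed.
End Base2.
Lemma sum_split (V : nmodType) a b (G : nat -> V) :
  \sum_(k < a * b) G k = \sum_(p < a) \sum_(s < b) G (p * b + s)%N.
Proof.
rewrite -(big_mkord xpredT G).
elim: a => [|a IH]; first by rewrite mul0n big_ord0 big_geq.
rewrite big_ord_recr /= mulSnr (@big_cat_nat _ _ _ (a * b)) //= ?leq_addr // IH.
congr (_ + _).
rewrite -{1}[(a * b)%N]add0n big_addn addKn big_mkord; apply: eq_bigr => s _.
by rewrite addnC.
Qed.

Section Trig.
Variable R : realType.
Definition ee (x : R) : R[i] := expi (2 * pi * x).

Lemma expiD (x y : R) : expi (x + y) = expi x * expi y.
Proof. rewrite /expi cosD sinD; apply/eqP; rewrite eq_complex /=; apply/andP; split; apply/eqP; ring. Qed.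

Lemma eeD x y : ee (x + y) = ee x * ee y.
Proof. by rewrite /ee mulrDr expiD. Qed.

Lemma ee0 : ee 0 = 1.
Proof. by rewrite /ee mulr0 /expi cos0 sin0. Qed.

Lemma ee_nat n : ee n%:R = 1.
Proof.
elim: n => [|n IH]; first exact: ee0.
rewrite -addn1 natrD eeD IH mul1r /ee mulr1 /expi.
have -> : 2 * pi = pi *+ 2 :> R by rewrite mulr2n; ring.
by rewrite cos2pi sin2pi.
Qed.

Lemma eeN x : ee (- x) * ee x = 1.
Proof. by rewrite -eeD addNr ee0. Qed.

Lemma ee_int m n : ee (m%:R - n%:R) = 1.
Proof.
have := eeN n%:R; rewrite ee_nat mulr1 => h.
by rewrite eeD ee_nat h mul1r.
Qed.

Lemma ee_pow x p : ee x ^+ p = ee (p%:R * x).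
Proof.
elim: p => [|p IH]; first by rewrite expr0 mul0r ee0.
by rewrite exprS IH -eeD -addn1 natrD; congr ee; ring.
Qed.

Lemma ee_conj (x : R) : (ee x)^* = ee (- x).
Proof. by rewrite /ee /expi mulrN cosN sinN. Qed.

Lemma norm_expi (x : R) : `|expi x| = 1.
Proof. by rewrite normc_def /= cos2Dsin2 sqrtr1. Qed.

Lemma ee_ne1 y : 0 < y < 1 -> ee y != 1.
Proof.
move=> /andP[y0 y1]; apply/negP => /eqP h.
have : complex.Re (ee y) = 1 by rewrite h.
rewrite /ee /expi /=.
have -> : 2 * pi * y = pi * y + pi * y by ring.
rewrite cosD.
have hs : 0 < sin (pi * y).
  apply: sin_gt0_pi; apply/andP; split; first by rewrite mulr_gt0 // pi_gt0.
  by rewrite -[ltRHS]mulr1 ltr_pM2l // pi_gt0.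
have := cos2Dsin2 (pi * y); rewrite !expr2 => hc.
move=> h2. nra.
Qed.

Lemma geo (a r r' : nat) : (r < a)%N -> (r' < a)%N ->
  \sum_(p < a) ee (p%:R * (r%:R - r'%:R) / a%:R) = if r == r' then a%:R else 0.
Proof.
move=> ra r'a; have a0 : (0 < a)%N by apply: leq_ltn_trans ra.
have a0R : (a%:R : R) != 0 by rewrite pnatr_eq0 -lt0n.
case: eqP => [<-|/eqP ne].
  under eq_bigr do rewrite subrr mulr0 mul0r ee0.
  by rewrite sumr_const card_ord.
set z := ee ((r%:R - r'%:R) / a%:R).
have -> : \sum_(p < a) ee (p%:R * (r%:R - r'%:R) / a%:R) = \sum_(p < a) z ^+ p.
  by apply: eq_bigr => p _; rewrite /z ee_pow mulrA.
have za : z ^+ a = 1.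
  by rewrite /z ee_pow mulrC mulfVK // ee_int.
have z1 : z != 1.
  have aR : (0 : R) < a%:R by rewrite ltr0n.
  have raR : (r%:R : R) < a%:R by rewrite ltr_nat.
  have r'aR : (r'%:R : R) < a%:R by rewrite ltr_nat.
  have r0 : (0 : R) <= r%:R by rewrite ler0n.
  have r'0 : (0 : R) <= r'%:R by rewrite ler0n.
  have [y [hy zy]] : exists y, y * a%:R = r%:R - r'%:R /\ z = ee y.
    by exists ((r%:R - r'%:R) / a%:R); split; [rewrite divfK|].
  rewrite zy.
  case: (ltngtP r r') => h; last by rewrite h eqxx in ne.
  - have hR : (r%:R : R) < r'%:R by rewrite ltr_nat.
    have -> : ee y = ee (y + 1) by rewrite eeD -[1]/(1%:R) ee_nat mulr1.
    apply: ee_ne1; apply/andP; split; nra.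
  - have hR : (r'%:R : R) < r%:R by rewrite ltr_nat.
    apply: ee_ne1; apply/andP; split; nra.
have := subrX1 z a; rewrite za subrr => /esym /eqP; rewrite mulf_eq0 subr_eq0 (negbTE z1) /=.
by move/eqP.
Qed.
End Trig.
Arguments ee {R}.

Section Main.
Variables (R : realType) (a b beta : nat).
Hypotheses (hb : (2 <= b)%N) (hab : (b <= a)%N) (hbeta : (2 <= beta)%N).

Let c0 : R[i] := ((Num.sqrt ((a * b)%:R : R))^-1)%:C.
Let NN : R := (beta * (a * b))%:R.

Lemma zeta_ee x y : zeta_pow R (beta * (a * b)) (x * y) = ee (x%:R * y%:R / NN).
Proof. rewrite /zeta_pow /ee; congr (expi _); rewrite /NN [in LHS]natrM; ring. Qed.

Lemma X_entry j k : Xmat R a b beta j k =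
  c0 * ee ((vartheta beta a j)%:R * (vartheta beta b k)%:R / NN).
Proof. by rewrite mxE zeta_ee. Qed.

Lemma adjX_entry k v : adjmx (Xmat R a b beta) k v =
  c0 * ee (- ((vartheta beta a v)%:R * (vartheta beta b k)%:R / NN)).
Proof. rewrite /adjmx !mxE zeta_ee rmorphM; congr (_ * _); [exact: conjc_real | exact: ee_conj]. Qed.

Lemma c0sq : c0 * c0 * (a * b)%:R = 1.
Proof.
have -> : ((a * b)%:R : R[i]) = ((a * b)%:R : R)%:C by rewrite rmorph_nat.
rewrite /c0 -!rmorphM /=.
have n0 : (0 : R) < (a * b)%:R by rewrite ltr0n muln_gt0; apply/andP; split; lia.
have -> : (Num.sqrt ((a * b)%:R : R))^-1 * (Num.sqrt ((a * b)%:R : R))^-1 * (a * b)%:R = 1.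
  by rewrite -invfM -expr2 sqr_sqrtr ?mulVf // ?ltW // gt_eqF.
by [].
Qed.

Lemma pos_facts : (0 < a)%N /\ (0 < b)%N /\ (0 < beta)%N.
Proof. split; [|split]; lia. Qed.

Lemma row_sum (w v : 'I_(a * b)) :
  \sum_(k < a * b) ee (((vartheta beta a w)%:R - (vartheta beta a v)%:R) *
       (vartheta beta b k)%:R / NN) = if w == v then (a * b)%:R else 0.
Proof.
have [a0 [b0 be0]] := pos_facts.
have a0R : (a%:R : R) != 0 by rewrite pnatr_eq0 -lt0n.
have b0R : (b%:R : R) != 0 by rewrite pnatr_eq0 -lt0n.
have be0R : (beta%:R : R) != 0 by rewrite pnatr_eq0 -lt0n.
rewrite (sum_split _ a b (fun k => ee (((vartheta beta a w)%:R - (vartheta beta a v)%:R) *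
       (vartheta beta b k)%:R / NN))).
have vt p s : (s < b)%N -> vartheta beta b (p * b + s) = (beta * p * b + s)%N.
  by move=> sb; rewrite /vartheta divnMDl // (divn_small sb) addn0 modnMDl (modn_small sb).
set tw := vartheta beta a w; set tv := vartheta beta a v.
set q := (w %/ a)%N; set r := (w %% a)%N; set q' := (v %/ a)%N; set r' := (v %% a)%N.
have hw : tw = (beta * q * a + r)%N by [].
have hv : tv = (beta * q' * a + r')%N by [].
have key p s : (tw%:R - tv%:R) * (beta * p * b + s)%N%:R / NN =
   ((beta * p * q)%N%:R - (beta * p * q')%N%:R) +
   (p%:R * (r%:R - r'%:R) / a%:R + s%:R * (tw%:R - tv%:R) / NN).
  rewrite {1}hw {1}hv /NN !natrD !natrM; field.
  by rewrite b0R a0R be0R.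
have -> : \sum_(p < a) \sum_(s < b) ee ((tw%:R - tv%:R) * (vartheta beta b (p * b + s))%:R / NN)
  = (\sum_(p < a) ee (p%:R * (r%:R - r'%:R) / a%:R)) * (\sum_(s < b) ee (s%:R * (tw%:R - tv%:R) / NN)).
  rewrite big_distrlr /=; apply: eq_bigr => p _; apply: eq_bigr => s _.
  by rewrite vt // key eeD ee_int mul1r eeD.
have ra : (r < a)%N by rewrite ltn_pmod.
have r'a : (r' < a)%N by rewrite ltn_pmod.
have qb : (q < b)%N by rewrite ltn_divLR //; have := ltn_ord w; lia.
have q'b : (q' < b)%N by rewrite ltn_divLR //; have := ltn_ord v; lia.
have wE : (w : nat) = (q * a + r)%N by rewrite [LHS](divn_eq w a).
have vE : (v : nat) = (q' * a + r')%N by rewrite [LHS](divn_eq v a).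
rewrite geo //; case: eqP => [er|ner]; last first.
  rewrite mul0r; case: eqP => // ewv; exfalso; apply: ner.
  by rewrite /r /r' ewv.
have -> : \sum_(s < b) ee (s%:R * (tw%:R - tv%:R) / NN) =
   \sum_(s < b) ee (s%:R * (q%:R - q'%:R) / b%:R).
  apply: eq_bigr => s _; congr ee.
  rewrite hw hv er /NN !natrD !natrM; field.
  by rewrite ?b0R ?a0R ?be0R.
rewrite geo //; case: eqP => [eq|neq].
  have -> : w = v by apply/val_inj; rewrite /= wE vE eq er.
  by rewrite eqxx natrM.
case: eqP => [ewv|]; last by rewrite mulr0.
by exfalso; apply: neq; rewrite /q /q' ewv.
Qed.

Lemma XXadj : Xmat R a b beta *m adjmx (Xmat R a b beta) = 1%:M.
Proof.
apply/matrixP => w v; rewrite [LHS]mxE.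
have -> : \sum_k Xmat R a b beta w k * adjmx (Xmat R a b beta) k v =
  c0 * c0 * \sum_(k < a * b) ee (((vartheta beta a w)%:R - (vartheta beta a v)%:R) *
       (vartheta beta b k)%:R / NN).
  rewrite mulr_sumr; apply: eq_bigr => k _; rewrite X_entry adjX_entry.
  rewrite mulrCA !mulrA -mulrA -eeD; congr (_ * ee _); ring.
rewrite row_sum !mxE; case: eqP => _; last by rewrite mulr0.
by rewrite c0sq.
Qed.

Lemma vt_lt (v : 'I_(a * b)) : (vartheta beta a v < beta * (a * b))%N.
Proof.
have [a0 [b0 be0]] := pos_facts.
have qb : (v %/ a < b)%N by rewrite ltn_divLR //; have := ltn_ord v; lia.
have ra : (v %% a < a)%N by rewrite ltn_pmod.
rewrite /vartheta; move: qb ra; set q := (v %/ a)%N; set r := (v %% a)%N => qb ra.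
have h := leq_mul (leqnn (beta * a)) qb; nia.
Qed.

Lemma main_res : let X := Xmat R a b beta in
  let A := X *m diag_mx (\row_k ((vartheta beta b k)%:R : R[i])) *m invmx X in
  typeII X /\ universal_pst A.
Proof.
move=> X A.
have PQ : X *m adjmx X = 1%:M := XXadj.
have QP := mulmx1C PQ.
have inv : invmx X = adjmx X.
  have [Xu _] := mulmx1_unit PQ.
  by rewrite -[invmx X]mulmx1 -PQ mulmxA mulVmx // mul1mx.
have [a0 [b0 be0]] := pos_facts.
split.
  split; first by split.
  by move=> j k j' k'; rewrite !X_entry !normrM /ee !norm_expi.
move=> v w.
pose tw := (vartheta beta a w)%:R : R.
pose tv := (vartheta beta a v)%:R : R.
pose tau := 2 + (tw - tv) / NN.
have NN0 : 0 < NN by rewrite ltr0n !muln_gt0 a0 b0 be0.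
have tau0 : 0 < tau.
  have h1 : tv / NN < 1 by rewrite ltr_pdivrMr // mul1r ltr_nat vt_lt.
  have h2 : 0 <= tw / NN by rewrite divr_ge0 // ?ler0n // ltW.
  rewrite /tau mulrBl; lra.
exists (2 * pi * tau); split; first by rewrite !mulr_gt0 // pi_gt0.
exists (X *m diag_mx (\row_l expi (- (2 * pi * tau * (vartheta beta b l)%:R))) *m adjmx X).
split.
  rewrite /A inv; apply: mexp_diag => // l; rewrite mxE.
  have -> : - 'i * (2 * pi * tau)%:C * (vartheta beta b l)%:R =
     - 'i * ((2 * pi * tau) * (vartheta beta b l)%:R)%:C.
  by rewrite [in RHS]rmorphM [in RHS]rmorph_nat mulrA.
  exact: exp_series.
rewrite entry_diag.
have -> : \sum_l X w l * adjmx X l v *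
    (\row_l expi (- (2 * pi * tau * (vartheta beta b l)%:R))) 0 l = \sum_(l < a * b) c0 * c0.
  apply: eq_bigr => l _; rewrite mxE X_entry adjX_entry.
  have -> : expi (- (2 * pi * tau * (vartheta beta b l)%:R)) = ee (- (tau * (vartheta beta b l)%:R)).
    by rewrite /ee; congr expi; ring.
  rewrite mulrCA !mulrA -mulrA -eeD -[_ * ee _ * ee _]mulrA -eeD.
  have -> : (vartheta beta a w)%:R * (vartheta beta b l)%:R / NN -
     (vartheta beta a v)%:R * (vartheta beta b l)%:R / NN +
      - (tau * (vartheta beta b l)%:R) = 0%:R - (2 * vartheta beta b l)%N%:R.
    rewrite /tau /tw /tv natrM; field.
    have [a0R [b0R be0R]] : (a%:R : R) != 0 /\ (b%:R : R) != 0 /\ (beta%:R : R) != 0.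
      by rewrite !pnatr_eq0 -!lt0n a0 b0 be0.
    by rewrite a0R b0R be0R.
  have := eeN R (2 * vartheta beta b l)%N%:R; rewrite ee_nat mulr1 sub0r => ->.
  by rewrite mulr1.
by rewrite sumr_const card_ord -mulr_natr c0sq normr1.
Qed.

End Main.

Theorem theorem7 (R : realType) (a b beta : nat)
  (hb : (2 <= b)%N) (hab : (b <= a)%N) (hbeta : (2 <= beta)%N) :
  let X := Xmat R a b beta in
  let A := X *m diag_mx (\row_k ((vartheta beta b k)%:R : R[i])) *m invmx X in
  typeII X /\ universal_pst A.
Proof. exact: (@main_res R a b beta hb hab hbeta). Qed.
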